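(* Let $(X,\mathcal{S})$ be a finite set system with $|X|=n=2^k$ for an integer $k\ge1$, and let the packings $\mathcal{F}_j$, the chains $F_j(S)$, the classes $\mathcal{S}_i$ and the families $\mathcal{F}_j^i$ be as defined in the context. Then there is an absolute constant $c>0$ such that for every $1\le i\le k$, every $j$ with $i-1\le j\le k$, and every $F\in\mathcal{F}_j^i$, $$|F|\le c\,\frac{n}{2^{i-1}} .$$
   Context: $\triangle$ denotes symmetric difference. Construction: set $\mathcal{F}_0=\{\emptyset\}$, and for $j=1,\dots,k$ let $\mathcal{F}_j\subseteq\mathcal{S}$ be a family that is maximal under inclusion subject to $|F\triangle F'|>n/2^j$ for all distinct $F,F'\in\mathcal{F}_j$. For $S\in\mathcal{S}$ define the nearest-neighbor chain $F_k(S):=S$ and, for $j=k,k-1,\dots,1$, let $F_{j-1}(S)$ be an element of $\mathcal{F}_{j-1}$ minimizing $|F_j(S)\triangle F|$ over $F\in\mathcal{F}_{j-1}$. For $i=1,\dots,k$ let $\mathcal{S}_i=\{S\in\mathcal{S}: n/2^i\le|S|<n/2^{i-1}\}$, and for $j=i-1,\dots,k$ let $\mathcal{F}_j^i=\{F_j(S):S\in\mathcal{S}_i\}$. *)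

(* Defs.v *)
From mathcomp Require Import all_boot all_order all_algebra.
Set Implicit Arguments. Unset Strict Implicit. Unset Printing Implicit Defensive.
Import Order.TTheory GRing.Theory Num.Theory.
Local Open Scope ring_scope.

Section Defs.
Variable T : finType.

Definition symdiff (A B : {set T}) : {set T} := (A :\: B) :|: (B :\: A).

Definition nX : nat := #|T|.

Definition separated (j : nat) (G : {set {set T}}) : bool :=
  [forall F in G, forall F' in G,
     (F != F') ==> ((nX%:R / (2%:R ^+ j) : rat) < (#|symdiff F F'|)%:R)].

Definition packings (k : nat) (S : {set {set T}}) (Fam : nat -> {set {set T}}) : Prop :=
  Fam 0%N = [set set0] /\
  (forall j, (1 <= j <= k)%N ->
     maxset (fun G : {set {set T}} => (G \subset S) && separated j G) (Fam j)).

Definition chains (k : nat) (S : {set {set T}}) (Fam : nat -> {set {set T}})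
  (chain : nat -> {set T} -> {set T}) : Prop :=
  forall S0, S0 \in S ->
    chain k S0 = S0 /\
    (forall j, (1 <= j <= k)%N ->
       chain j.-1 S0 \in Fam j.-1 /\
       (forall F, F \in Fam j.-1 ->
          (#|symdiff (chain j S0) (chain j.-1 S0)| <= #|symdiff (chain j S0) F|)%N)).

Definition Sclass (S : {set {set T}}) (i : nat) : {set {set T}} :=
  [set S0 in S | ((nX%:R / (2%:R ^+ i) : rat) <= (#|S0|)%:R)
               && ((#|S0|)%:R < (nX%:R / (2%:R ^+ i.-1) : rat))].

Definition Fji (S : {set {set T}}) (chain : nat -> {set T} -> {set T}) (j i : nat)
  : {set {set T}} := [set chain j S0 | S0 in Sclass S i].

End Defs.

(* Main.v *)
Require Import Defs.
From mathcomp Require Import all_boot all_order all_algebra.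
From mathcomp Require Import zify.
Set Implicit Arguments. Unset Strict Implicit.
Import Order.TTheory GRing.Theory Num.Theory.
Local Open Scope ring_scope.

Lemma pow2div (a b : nat) : (b <= a)%N ->
  ((2 ^ a)%N%:R / (2%:R ^+ b) : rat) = (2 ^ (a - b))%N%:R.
Proof.
move=> H; rewrite -{1}(subnK H) expnD natrM [(2 ^ b)%:R]natrX mulfK //.
by rewrite expf_neq0.
Qed.

Section Aux.
Variable T : finType.

Lemma symdiffC (A B : {set T}) : symdiff A B = symdiff B A.
Proof. by rewrite /symdiff setUC. Qed.

Lemma symdiffxx (A : {set T}) : symdiff A A = set0.
Proof. by rewrite /symdiff setDv setU0. Qed.

Lemma symdiff_card (A B : {set T}) : (#|A| <= #|B| + #|symdiff B A|)%N.
Proof.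
apply: leq_trans (leq_card_setU _ _).
apply: subset_leq_card; apply/subsetP => x xA.
rewrite /symdiff !inE xA; by case: (x \in B).
Qed.

Lemma sepP j (G : {set {set T}}) F F' : separated j G -> F \in G -> F' \in G ->
  F != F' -> (nX T)%:R / (2%:R ^+ j) < (#|symdiff F F'|)%:R :> rat.
Proof.
move=> /forallP/(_ F)/implyP H FG F'G neq.
by move: (H FG) => /forallP/(_ F')/implyP/(_ F'G)/implyP/(_ neq).
Qed.

Lemma step k (S : {set {set T}}) (Fam : nat -> {set {set T}}) (chain : nat -> {set T} -> {set T}) (S0 : {set T}) m :
  packings k S Fam -> chains k S Fam chain -> #|T| = (2 ^ k)%N -> S0 \in S ->
  (1 <= m <= k)%N ->
  (#|symdiff (chain m S0) (chain m.-1 S0)| <= 2 ^ (k - m.-1))%N.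
Proof.
move=> [Fam0 Hmax] Hc HT HS0 /andP[m1 mk].
have [Hk Hch] := Hc S0 HS0.
have [Hin Hmin] := Hch m (introT andP (conj m1 mk)).
have XS : chain m S0 \in S.
  case: (ltngtP m k) => [mlt|//|->]; last by rewrite Hk.
  - have [H1 _] := Hch m.+1 (introT andP (conj (ltn0Sn m) mlt)).
    move: (Hmax m (introT andP (conj m1 (ltnW mlt)))) => /maxsetP[/andP[sub _] _].
    exact: (subsetP sub _ H1).
  - by move=> kl; move: mk; rewrite leqNgt kl.
case: m m1 mk Hin Hmin XS => [//|[|m']] _ mk Hin Hmin XS.
  rewrite /= subn0 -HT; apply: leq_trans (max_card _); exact: subset_leq_card (subsetT _).
set m := m'.+2 in mk Hin Hmin XS *.
set X := chain m S0.
set G := Fam m.-1.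
case: (boolP [exists F in G, (#|symdiff X F| <= 2 ^ (k - m.-1))%N]).
  move=> /existsP[F /andP[FG HF]]; exact: leq_trans (Hmin F FG) HF.
move=> /existsPn Hno.
have m1k : (1 <= m.-1 <= k)%N by rewrite /= ltnW.
move: (Hmax m.-1 m1k) => /maxsetP[/andP[GS Gsep] Gmax].
have bnd : (nX T)%:R / (2%:R ^+ m.-1) = (2 ^ (k - m.-1))%N%:R :> rat.
  by rewrite /nX HT pow2div // ltnW.
have Hsep : (X |: G \subset S) && separated m.-1 (X |: G).
  apply/andP; split; first by rewrite subUset sub1set XS GS.
  apply/forallP => F; apply/implyP => FG; apply/forallP => F'; apply/implyP => F'G.
  apply/implyP => neq.
  rewrite !in_setU1 in FG F'G.
  case/orP: FG => [/eqP EF|FG]; case/orP: F'G => [/eqP EF'|F'G].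
  - by move/negP: neq; rewrite EF EF'.
  - move: (Hno F'); rewrite F'G /= -ltnNge -EF => lt.
    by rewrite bnd ltr_nat.
  - move: (Hno F); rewrite FG /= -ltnNge -EF' => lt.
    by rewrite bnd ltr_nat symdiffC.
  - exact: (sepP Gsep FG F'G neq).
have eqG := Gmax _ Hsep (subsetUr _ _).
have XG : X \in G by rewrite /G -eqG setU11.
by move: (Hno X); rewrite XG symdiffxx cards0.
Qed.

Lemma ind k (S : {set {set T}}) (Fam : nat -> {set {set T}}) (chain : nat -> {set T} -> {set T}) (S0 : {set T}) t :
  packings k S Fam -> chains k S Fam chain -> #|T| = (2 ^ k)%N -> S0 \in S ->
  (t <= k)%N -> (#|chain (k - t)%N S0| + 2 <= #|S0| + 2 ^ t.+1)%N.
Proof.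
move=> Hp Hc HT HS0; elim: t => [_|t IH tk].
  by rewrite subn0 (proj1 (Hc S0 HS0)) expn1.
have IH' := IH (ltnW tk).
have m1 : (1 <= k - t <= k)%N by rewrite leq_subr subn_gt0 tk.
have := step Hp Hc HT HS0 m1.
have E1 : (k - t).-1 = (k - t.+1)%N by rewrite subnS.
have E2 : (k - (k - t.+1))%N = t.+1 by rewrite subKn.
rewrite E1 E2 => Hd.
have Ht := symdiff_card (chain (k - t.+1)%N S0) (chain (k - t)%N S0).
rewrite (expnS _ t.+1); lia.
Qed.

End Aux.

Theorem mainTheorem6 :
  exists c : rat, 0 < c /\
  forall (k : nat) (T : finType) (S : {set {set T}})
         (Fam : nat -> {set {set T}}) (chain : nat -> {set T} -> {set T}),
    (1 <= k)%N ->
    #|T| = (2 ^ k)%N ->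
    packings k S Fam ->
    chains k S Fam chain ->
    forall i j : nat, (1 <= i <= k)%N -> (i.-1 <= j <= k)%N ->
    forall F, F \in Fji S chain j i ->
      ((#|F|)%:R : rat) <= c * ((#|T|)%:R / (2%:R ^+ i.-1)).
Proof.
exists 3%:R; split => //.
move=> k T S Fam chain k1 HT Hp Hc i j /andP[i1 ik] /andP[ij jk] F.
move=> /imsetP[S0 HS0 ->].
rewrite inE in HS0; case/and3P: HS0 => S0S _ lt.
have ik' : (i.-1 <= k)%N by apply: leq_trans ik; exact: leq_pred.
rewrite /nX HT pow2div // ltr_nat in lt.
rewrite HT pow2div // -natrM ler_nat.
have := ind Hp Hc HT S0S (leq_subr j k).
rewrite subKn // => H.
have e : (2 ^ (k - j) <= 2 ^ (k - i.-1))%N by rewrite leq_exp2l // leq_sub2l.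
rewrite expnS in H; lia.
Qed.
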